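(* Let $\tau$ be a signature, $\kappa$ an infinite cardinal, $s$ and $S^2_\kappa(\tau)$ as in the context. Let $\{\mathcal A_i:i\in I\}$ be a set of $\tau$-structures, for each $i\in I$ let $\overrightarrow{R^i_\kappa}=(R^i_k)_{k<\kappa}$ be relations of kind $s$ on $\mathcal A_i$, and put $U=\{\mathbf{tp}(\mathcal A_i,\overrightarrow{R^i_\kappa}):i\in I\}$. Let $J\subseteq I$, $\mathcal F$ an ultrafilter on $J$, $\mathcal A=\prod_{j\in J}\mathcal A_j/\mathcal F$, and $\overrightarrow{R_\kappa}$ the relations of kind $s$ on $\mathcal A$ given by $R_k=\prod_{j\in J}R^j_k/\mathcal F$ ($k<\kappa$). Then $\mathbf{tp}(\mathcal A,\overrightarrow{R_\kappa})\in\overline U$, where $\overline U$ is the topological closure of $U$ in $2^\lambda$. Furthermore, if $p\in\overline U$, then there exist a set $L\subseteq I$, an ultrafilter $\mathcal G$ on $L$, and relations $\overrightarrow{S^l_\kappa}$ of kind $s$ on $\mathcal A_l$ ($l\in L$) such that $\mathbf{tp}(\mathcal B,\overrightarrow{S_\kappa})=p$, where $\mathcal B=\prod_{l\in L}\mathcal A_l/\mathcal G$ and $S_k=\prod_{l\in L}S^l_k/\mathcal G$ for $k<\kappa$.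
   Context: Fix a sequence $s=(s_k)_{k<\kappa}$ of natural numbers in which each value occurs $\kappa$ many times. Let $X_k$ ($k<\kappa$) be new relation symbols with arity $s_k$, and $F$ the set of first-order sentences of signature $\tau\cup\{X_k:k<\kappa\}$; $|F|=\lambda$ with a fixed enumeration $F=\{\phi_\xi:\xi<\lambda\}$, so subsets of $F$ are identified with elements of $2^\lambda$ (product topology). A $\kappa$-2-type is a set $p\subseteq F$ such that every finite subset of $p$ has a model and for every $\phi\in F$ either $\phi\in p$ or $\neg\phi\in p$; $S^2_\kappa(\tau)$ is the set of $\kappa$-2-types with the subspace topology from $2^\lambda$. A tuple $(R_k)_{k<\kappa}$ of relations on a $\tau$-structure $\mathcal A$ is of kind $s$ if $R_k\subseteq A^{s_k}$ for all $k$, and $\mathbf{tp}(\mathcal A,(R_k)_{k<\kappa})=\{\phi\in F:\langle\mathcal A,R_k\rangle_{k<\kappa}\models\phi\}$ with $X_k$ interpreted by $R_k$. *)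

(* Defs.v *)
From Stdlib Require Import ClassicalEpsilon FunctionalExtensionality PropExtensionality.
From Stdlib Require List.
From mathcomp Require Import all_boot.

Set Implicit Arguments.
Unset Strict Implicit.
Unset Printing Implicit Defensive.

Record signature := Signature {
  fsym : Type;  (* function symbols (constants = arity 0) *)
  rsym : Type;
  farity : fsym -> nat;
  rarity : rsym -> nat }.

Record structure (L : signature) := Structure {
  dom : Type;
  dom_inh : inhabited dom;
  fn : forall f : fsym L, ('I_(farity f) -> dom) -> dom;
  rl : forall r : rsym L, ('I_(rarity r) -> dom) -> Prop }.

Inductive term (L : signature) : Type :=
  | var : nat -> term L
  | app : forall f : fsym L, ('I_(farity f) -> term L) -> term L.

Inductive formula (L : signature) : Type :=
  | fEq : term L -> term L -> formula L
  | fRel : forall r : rsym L, ('I_(rarity r) -> term L) -> formula L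
  | fNeg : formula L -> formula L
  | fAnd : formula L -> formula L -> formula L
  | fEx : nat -> formula L -> formula L.

Fixpoint occurs (L : signature) (x : nat) (t : term L) : Prop :=
  match t with
  | var y => x = y
  | app f ts => exists i, occurs x (ts i)
  end.

Fixpoint free_in (L : signature) (x : nat) (phi : formula L) : Prop :=
  match phi with
  | fEq t u => occurs x t \/ occurs x u
  | fRel r ts => exists i, occurs x (ts i)
  | fNeg p => free_in x p
  | fAnd p q => free_in x p \/ free_in x q
  | fEx y p => x <> y /\ free_in x p
  end.

Definition sentence (L : signature) (phi : formula L) : Prop :=
  forall x, ~ free_in x phi.

Definition upd (D : Type) (e : nat -> D) (x : nat) (a : D) : nat -> D :=
  fun y => if y == x then a else e y.

Fixpoint eval (L : signature) (M : structure L) (e : nat -> dom M) (t : term L)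
  : dom M :=
  match t with
  | var y => e y
  | app f ts => @fn L M f (fun i => @eval L M e (ts i))
  end.

Fixpoint sat (L : signature) (M : structure L) (e : nat -> dom M) (phi : formula L)
  : Prop :=
  match phi with
  | fEq t u => @eval L M e t = @eval L M e u
  | fRel r ts => @rl L M r (fun i => @eval L M e (ts i))
  | fNeg p => ~ @sat L M e p
  | fAnd p q => @sat L M e p /\ @sat L M e q
  | fEx y p => exists a : dom M, @sat L M (upd e y a) p
  end.

Definition expsig (L : signature) (K : Type) (s : K -> nat) : signature :=
  {| fsym := fsym L; rsym := (rsym L + K)%type; farity := @farity L;
     rarity := fun r => match r with inl r0 => rarity r0 | inr k => s k end |}.

Definition rels_of_kind (K : Type) (s : K -> nat) (D : Type) : Type :=
  forall k : K, ('I_(s k) -> D) -> Prop.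

Definition expand (L : signature) (K : Type) (s : K -> nat) (M : structure L)
  (R : rels_of_kind s (dom M)) : structure (expsig L s) :=
  @Structure (expsig L s) (dom M) (dom_inh M) (@fn L M)
    (fun r : (rsym L + K)%type =>
       match r as rr return ('I_(@rarity (expsig L s) rr) -> dom M) -> Prop with
       | inl r0 => @rl L M r0 | inr k => R k end).

(* A point of 2^F: a set of sentences of the expanded signature. *)
Definition tp (L : signature) (K : Type) (s : K -> nat) (M : structure L)
  (R : rels_of_kind s (dom M)) : formula (expsig L s) -> Prop :=
  fun phi => sentence phi /\ forall e : nat -> dom M, @sat (expsig L s) (expand R) e phi.

(* Closure in the product topology of 2^F: every basic open neighbourhood
   (determined by finitely many coordinates) of p meets U. *)
Definition in_closure (L : signature) (U : (formula L -> Prop) -> Prop)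
  (p : formula L -> Prop) : Prop :=
  forall D : list (formula L), (forall phi, List.In phi D -> sentence phi) ->
    exists u, U u /\ forall phi, List.In phi D -> (p phi <-> u phi).

Definition ultrafilter (T : Type) (F : (T -> Prop) -> Prop) : Prop :=
  [/\ F (fun _ => True), ~ F (fun _ => False),
      (forall X Y, F X -> F Y -> F (fun t => X t /\ Y t)),
      (forall X Y : T -> Prop, F X -> (forall t, X t -> Y t) -> F Y) &
      (forall X, F X \/ F (fun t => ~ X t))].

Section Ultraproduct.
Variables (L : signature) (T : Type) (A : T -> structure L) (F : (T -> Prop) -> Prop).

Definition pre := forall t, dom (A t).
Definition ueqv (a b : pre) : Prop := F (fun t => a t = b t).
Definition ucarrier := { C : pre -> Prop | exists a, forall b, C b <-> ueqv a b }.
Definition ucls (a : pre) : ucarrier :=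
  exist _ (ueqv a) (ex_intro _ a (fun b => iff_refl (ueqv a b))).
Definition urep (C : ucarrier) : pre :=
  proj1_sig (constructive_indefinite_description _ (proj2_sig C)).

Definition pre_pt : pre := fun t =>
  proj1_sig (constructive_indefinite_description (fun _ : dom (A t) => True)
    (match dom_inh (A t) with inhabits x => ex_intro _ x I end)).

Definition ultraprod : structure L :=
  {| dom := ucarrier; dom_inh := inhabits (ucls pre_pt);
     fn := fun f args => ucls (fun t => @fn L (A t) f (fun i => urep (args i) t));
     rl := fun r args => F (fun t => @rl L (A t) r (fun i => urep (args i) t)) |}.

Definition ultrarels (K : Type) (s : K -> nat) (R : forall t, rels_of_kind s (dom (A t)))
  : rels_of_kind s (dom ultraprod) :=
  fun k args => F (fun t => R t k (fun i => urep (args i) t)).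

End Ultraproduct.

(* Main.v *)
Require Import Defs.
From mathcomp Require Import all_boot.
From Stdlib Require Import ClassicalEpsilon FunctionalExtensionality PropExtensionality ProofIrrelevance Classical.
From Stdlib Require List.

Set Implicit Arguments.
Unset Strict Implicit.

Section Filt.
Variables (T : Type) (F : (T -> Prop) -> Prop) (HF : ultrafilter F).

Lemma fT : F (fun _ => True). Proof. by case: HF. Qed.
Lemma fF : ~ F (fun _ => False). Proof. by case: HF => _ H. Qed.
Lemma fI X Y : F X -> F Y -> F (fun t => X t /\ Y t). Proof. have [_ _ H _ _] := HF; exact: H. Qed.
Lemma fS (X Y : T -> Prop) : F X -> (forall t, X t -> Y t) -> F Y. Proof. have [_ _ _ H _] := HF; exact: H. Qed.
Lemma fC X : F X \/ F (fun t => ~ X t). Proof. have [_ _ _ _ H] := HF; exact: H. Qed.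

Lemma fall X : (forall t, X t) -> F X.
Proof. move=> H; apply: (fS fT) => t _; exact: H. Qed.

Lemma fex X : F X -> exists t, X t.
Proof.
move=> FX; apply: NNPP => N; apply: fF; apply: (fS FX) => t Xt; apply: N; by exists t.
Qed.

Lemma fneg X : ~ F X <-> F (fun t => ~ X t).
Proof.
split; first by case: (fC X).
move=> H1 H2; apply: fF; apply: (fS (fI H1 H2)) => t [] //.
Qed.

Lemma fand X Y : F X /\ F Y <-> F (fun t => X t /\ Y t).
Proof.
split; first by case=> *; apply: fI.
by move=> H; split; apply: (fS H) => t [].
Qed.

Lemma fcong (X Y Z : T -> Prop) : F X -> (forall t, X t -> (Y t <-> Z t)) -> (F Y <-> F Z).
Proof.
move=> FX H; split=> FY; apply: (fS (fI FX FY)) => t [Xt Yt]; by apply/(H t Xt).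
Qed.

Lemma ford n (X : 'I_n -> T -> Prop) : (forall i, F (X i)) -> F (fun t => forall i, X i t).
Proof.
elim: n X => [|n IH] X H.
  by apply: fall => t [].
have H1 := IH (fun i => X (lift ord0 i)) (fun i => H _).
apply: (fS (fI (H ord0) H1)) => t [X0 Xs] i.
case: (unliftP ord0 i) => [j ->|->] //.
Qed.

Lemma flist (A : Type) (D : list A) (X : A -> T -> Prop) :
  (forall a, List.In a D -> F (X a)) -> F (fun t => forall a, List.In a D -> X a t).
Proof.
elim: D => [|a D IH] H /=; first by apply: fall.
have H1 : F (fun t => forall a, List.In a D -> X a t) by apply: IH => b Hb; apply: H; right.
apply: (fS (fI (H a (or_introl erefl)) H1)) => t [Xa XD] b [<-|Hb] //; exact: XD.
Qed.
End Filt.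

Section UP.
Variables (L : signature) (T : Type) (B : T -> structure L) (F : (T -> Prop) -> Prop).
Hypothesis HF : ultrafilter F.

Lemma ueqv_refl (a : pre B) : ueqv F a a.
Proof. by apply: fall. Qed.
Lemma ueqv_sym (a b : pre B) : ueqv F a b -> ueqv F b a.
Proof. move=> H; apply: (fS HF H) => t ->. done. Qed.
Lemma ueqv_trans (a b c : pre B) : ueqv F a b -> ueqv F b c -> ueqv F a c.
Proof. move=> H1 H2; apply: (fS HF (fI HF H1 H2)) => t [-> ->]. done. Qed.

Lemma ucls_eq (a b : pre B) : ueqv F a b -> ucls F a = ucls F b.
Proof.
move=> H; apply: eq_sig_hprop; first by move=> x p q; apply: proof_irrelevance.
rewrite /=.
apply: functional_extensionality => c; apply: propositional_extensionality.
split=> Hc; [exact: ueqv_trans (ueqv_sym H) Hc | exact: ueqv_trans H Hc].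
Qed.

Lemma ucls_eq_inv (a b : pre B) : ucls F a = ucls F b -> ueqv F a b.
Proof.
move=> H; have : proj1_sig (ucls F b) b by exact: ueqv_refl.
by rewrite -H.
Qed.

Lemma urep_spec (C : ucarrier B F) : forall b, proj1_sig C b <-> ueqv F (urep C) b.
Proof.
rewrite /urep; case: (constructive_indefinite_description _ _) => a Ha /=. exact: Ha.
Qed.

Lemma ucls_urep (C : ucarrier B F) : ucls F (urep C) = C.
Proof.
apply: eq_sig_hprop; first by move=> x p q; apply: proof_irrelevance.
rewrite /=.
apply: functional_extensionality => c; apply: propositional_extensionality.
by split=> Hc; apply/urep_spec.
Qed.

Lemma urep_ucls (a : pre B) : ueqv F (urep (ucls F a)) a.
Proof. apply/urep_spec => /=; exact: ueqv_refl. Qed.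

Definition loc (e : nat -> ucarrier B F) (t : T) : nat -> dom (B t) := fun n => urep (e n) t.

Variable inh : inhabited (ucarrier B F).
Variable rlM : forall r : rsym L, ('I_(rarity r) -> ucarrier B F) -> Prop.
Hypothesis HrlM : forall r args, @rlM r args <-> F (fun t => @rl L (B t) r (fun i => urep (args i) t)).

Definition UM := @Structure L (ucarrier B F) inh
  (fun f args => ucls F (fun t => @fn L (B t) f (fun i => urep (args i) t))) rlM.


Lemma los_term (e : nat -> dom UM) (tm : term L) :
  ueqv F (urep (@eval L UM e tm)) (fun t => @eval L (B t) (loc e t) tm).
Proof.
elim: tm => [y|f ts IH] /=; first exact: ueqv_refl.
apply: ueqv_trans (urep_ucls _) _.
have H := ford HF IH.
apply: (fS HF H) => t Ht /=; congr (fn _); apply: functional_extensionality => i.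
exact: Ht.
Qed.

Lemma los_term_eq (e : nat -> dom UM) (tm : term L) :
  @eval L UM e tm = ucls F (fun t => @eval L (B t) (loc e t) tm).
Proof. rewrite -(ucls_urep (@eval L UM e tm)); apply: ucls_eq; exact: los_term. Qed.

Lemma loc_upd e y a t : loc (upd e y a) t = upd (loc e t) y (urep a t).
Proof.
apply: functional_extensionality => n; rewrite /loc /upd; by case: (n == y).
Qed.

Lemma los (phi : formula L) : forall e : nat -> dom UM,
  @sat L UM e phi <-> F (fun t => @sat L (B t) (loc e t) phi).
Proof.
elim: phi => [t1 t2|r ts|p IH|p IHp q IHq|y p IH] e /=.
- rewrite !los_term_eq; split; first exact: ucls_eq_inv.
  exact: ucls_eq.
- rewrite HrlM; apply: (fcong HF (ford HF (fun i => los_term e (ts i)))) => t Ht.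
  have -> : (fun i => urep (eval e (ts i)) t) = (fun i => eval (loc e t) (ts i)) by
    apply: functional_extensionality => i; exact: Ht.
  done.
- rewrite -fneg //; split=> H1 H2; apply: H1; by apply/IH.
- rewrite -fand // IHp IHq; done.
- split.
  + case=> a /IH Ha; apply: (fS HF Ha) => t; rewrite loc_upd => H; by exists (urep a t).
  + move=> H.
    pose w : pre B := fun t => epsilon (dom_inh (B t)) (fun b => @sat L (B t) (upd (loc e t) y b) p).
    exists (ucls F w); apply/IH.
    have E : F (fun t => urep (ucls F w) t = w t) := urep_ucls w.
    have HH := fI HF H E.
    refine (fS HF HH _) => t [[b Hb] Ht].
    rewrite loc_upd Ht /w; exact: (epsilon_spec (dom_inh (B t)) (fun b => @sat L (B t) (upd (loc e t) y b) p) (ex_intro _ b Hb)).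
Qed.
End UP.

Lemma eval_ext (L : signature) (M : structure L) (e1 e2 : nat -> dom M) (tm : term L) :
  (forall x, occurs x tm -> e1 x = e2 x) -> eval e1 tm = eval e2 tm.
Proof.
elim: tm => [y|f ts IH] /= H; first exact: H.
congr (fn _); apply: functional_extensionality => i; apply: IH => x Hx; apply: H; by exists i.
Qed.

Lemma sat_ext (L : signature) (M : structure L) (phi : formula L) :
  forall e1 e2 : nat -> dom M, (forall x, free_in x phi -> e1 x = e2 x) ->
  (sat e1 phi <-> sat e2 phi).
Proof.
elim: phi => [t1 t2|r ts|p IH|p IHp q IHq|y p IH] e1 e2 /= H.
- rewrite (eval_ext (e1:=e1) (e2:=e2)); last by move=> x Hx; apply: H; left.
  rewrite (eval_ext (e1:=e1) (e2:=e2) (tm:=t2)) //; by move=> x Hx; apply: H; right.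
- have -> : (fun i => eval e1 (ts i)) = (fun i => eval e2 (ts i)) => //.
  apply: functional_extensionality => i; apply: eval_ext => x Hx; apply: H; by exists i.
- by rewrite (IH e1 e2 H).
- rewrite (IHp e1 e2); last by move=> x Hx; apply: H; left.
  by rewrite (IHq e1 e2) //; move=> x Hx; apply: H; right.
- have E : forall a, sat (upd e1 y a) p <-> sat (upd e2 y a) p.
    move=> a; apply: IH => x Hx; rewrite /upd; case: eqP => // Hxy; apply: H; by split.
  by split=> -[a Ha]; exists a; apply/E.
Qed.

Lemma tp_iff (L : signature) (K : Type) (s : K -> nat) (M : structure L)
  (R : rels_of_kind s (dom M)) (phi : formula (expsig L s)) (e : nat -> dom M) :
  sentence phi -> (tp R phi <-> @sat _ (expand R) e phi).
Proof.
move=> Hs; split; first by case=> _; apply.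
move=> He; split => // e'.
have E : forall x, free_in x phi -> e' x = e x by move=> x Hx; case: (Hs x).
exact: (proj2 (@sat_ext _ (expand R) phi e' e E) He).
Qed.

Lemma tp_sent (L : signature) (K : Type) (s : K -> nat) (M : structure L)
  (R : rels_of_kind s (dom M)) (phi : formula (expsig L s)) : tp R phi -> sentence phi.
Proof. by case. Qed.

Lemma los_tp (tau : signature) (K : Type) (s : K -> nat) (T : Type)
  (A : T -> structure tau) (F : (T -> Prop) -> Prop) (HF : ultrafilter F)
  (R : forall t, rels_of_kind s (dom (A t))) (phi : formula (expsig tau s)) :
  sentence phi ->
  (tp (@ultrarels tau T A F K s R) phi <-> F (fun t => tp (R t) phi)).
Proof.
move=> Hs.
pose M := expand (@ultrarels tau T A F K s R).
pose B := fun t => expand (R t).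
have Hrl : forall r args, @rl _ M r args <->
    F (fun t => @rl _ (B t) r (fun i => @urep _ _ B F (args i) t)).
  by move=> [r0|k] args.
have L1 : forall e, @sat _ M e phi <-> F (fun t => @sat _ (B t) (@loc _ _ B F e t) phi) :=
  @los _ _ B F HF (dom_inh M) (@rl _ M) Hrl phi.
pose e0 : nat -> dom M := fun _ => ucls F (pre_pt A).
rewrite (tp_iff (@ultrarels tau T A F K s R) e0 Hs) L1; apply: (fcong HF (@fall _ _ HF (fun _ => True) (fun _ => I))) => t _.
by rewrite (tp_iff (R t) (@loc _ _ B F e0 t) Hs).
Qed.
From mathcomp Require Import boolp classical_sets filter.

Lemma exists_ultra (T : Type) (F0 : (T -> Prop) -> Prop) :
  F0 (fun _ => True) -> ~ F0 (fun _ => False) ->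
  (forall X Y, F0 X -> F0 Y -> F0 (fun t => X t /\ Y t)) ->
  (forall X Y : T -> Prop, F0 X -> (forall t, X t -> Y t) -> F0 Y) ->
  exists G, ultrafilter G /\ forall X, F0 X -> G X.
Proof.
move=> HT HF HI HS.
have PF : ProperFilter F0.
  split; first exact: HF.
  split; [exact: HT | move=> A B; exact: HI | move=> P Q PQ FP; exact: HS _ _ FP PQ].
have [G [UG sub]] := ultraFilterLemma PF.
exists G; split; last by move=> X; apply: sub.
split.
- exact: filterT.
- exact: (filter_not_empty G).
- move=> X Y; exact: filterI.
- move=> X Y GX XY; exact: filterS XY GX.
- move=> X; exact: in_ultra_setVsetC.
Qed.

Lemma neg_tp (L : signature) (K : Type) (s : K -> nat) (M : structure L)
  (R : rels_of_kind s (dom M)) (phi : formula (expsig L s)) :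
  sentence phi -> (tp R (fNeg phi) <-> ~ tp R phi).
Proof.
move=> Hs; case: (dom_inh M) => a0.
have Hs' : sentence (fNeg phi) by move=> x; exact: Hs.
rewrite (tp_iff R (fun _ => a0) Hs) (tp_iff R (fun _ => a0) Hs'); done.
Qed.

Theorem lemma2p27 (tau : signature) (K : Type) (s : K -> nat)
  (K_infinite : exists f : nat -> K, injective f)
  (s_kappa : forall n : nat, exists g : K -> {k : K | s k = n}, bijective g)
  (I : Type) (A : I -> structure tau) (R : forall i : I, rels_of_kind s (dom (A i))) :
  let U := fun p => exists i : I, p = tp (R i) in
  (forall (J : I -> Prop) (F : ({j : I | J j} -> Prop) -> Prop),
     ultrafilter F ->
     in_closure U (tp (@ultrarels tau {j : I | J j} (fun j => A (proj1_sig j)) F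
                                 K s (fun j => R (proj1_sig j)))))
  /\
  (forall p : formula (expsig tau s) -> Prop,
     (forall phi, p phi -> sentence phi) ->
     in_closure U p ->
     exists (L : I -> Prop) (G : ({l : I | L l} -> Prop) -> Prop)
            (S : forall l : {l : I | L l}, rels_of_kind s (dom (A (proj1_sig l)))),
       ultrafilter G /\
       tp (@ultrarels tau {l : I | L l} (fun l => A (proj1_sig l)) G K s S) = p).
Proof.
move=> U; split.
- move=> J F HF D HD.
  set RR := @ultrarels tau {j : I | J j} (fun j => A (proj1_sig j)) F K s (fun j => R (proj1_sig j)).
  have HX : forall phi, List.In phi D ->
      F (fun t => tp RR phi <-> tp (R (proj1_sig t)) phi).
    move=> phi Hin; have Hs := HD _ Hin.
    have E := los_tp HF (fun j => R (proj1_sig j)) Hs.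
    case: (Classical_Prop.classic (tp RR phi)) => H.
    + apply: (fS HF (proj1 E H)) => t Ht; by split.
    + have H2 : F (fun t => ~ tp (R (proj1_sig t)) phi).
        apply/(fneg HF) => /E; exact: H.
      apply: (fS HF H2) => t Ht; by split.
  have [t Ht] := fex HF (flist HF HX).
  exists (tp (R (proj1_sig t))); split; first by exists (proj1_sig t).
  move=> phi Hin; exact: Ht phi Hin.
- move=> p Hp Hcl.
  pose T := {l : I | True}.
  pose F0 : (T -> Prop) -> Prop := fun X => exists D : list _,
    (forall phi, List.In phi D -> p phi) /\
    forall t : T, (forall phi, List.In phi D -> tp (R (proj1_sig t)) phi) -> X t.
  have [G [HG sub]] : exists G, ultrafilter G /\ forall X, F0 X -> G X.
    apply: exists_ultra.
    + by exists nil; split.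
    + move=> [D [HD HX]].
      have [u [[i ->] Hu]] := Hcl D (fun phi H => Hp _ (HD _ H)).
      apply: (HX (exist _ i Logic.I)) => phi Hin /=; apply/Hu => //; exact: HD.
    + move=> X Y [D1 [H1 X1]] [D2 [H2 X2]]; exists (D1 ++ D2); split.
        by move=> phi /List.in_app_iff [/H1|/H2].
      move=> t Ht; split; [apply: X1|apply: X2] => phi Hin; apply: Ht;
        apply/List.in_app_iff; by [left|right].
    + move=> X Y [D [HD HX]] XY; exists D; split => // t Ht; apply: XY; exact: HX.
  exists (fun _ => True), G, (fun l => R (proj1_sig l)); split => //.
  apply: functional_extensionality => phi; apply: propositional_extensionality.
  case: (Classical_Prop.classic (sentence phi)) => Hs; last first.
    by split => [/tp_sent|/Hp].
  rewrite (los_tp HG (fun l : T => R (proj1_sig l)) Hs); split.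
  + move=> Gphi; apply: Classical_Prop.NNPP => np.
    have Hs' : sentence (fNeg phi) by move=> x; exact: Hs.
    have [u [[i ->] Hu]] := Hcl [:: phi; fNeg phi]
      (fun psi H => match H with or_introl e => eq_ind _ _ Hs _ e
                    | or_intror (or_introl e) => eq_ind _ _ Hs' _ e
                    | or_intror (or_intror f) => False_ind _ f end).
    have pn : p (fNeg phi).
      apply/(Hu _ (or_intror (or_introl erefl))); apply/neg_tp => // Hi.
      by apply: np; apply/(Hu _ (or_introl erefl)).
    have Gn : G (fun t : T => tp (R (proj1_sig t)) (fNeg phi)).
      apply: sub; exists [:: fNeg phi]; split; first by move=> ? [<-|[]].
      move=> t H; apply: H; by left.
    apply: (fF HG); apply: (fS HG (fI HG Gphi Gn)) => t [H1 /neg_tp H2]; exact: H2.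
  + move=> pphi; apply: sub; exists [:: phi]; split; first by move=> ? [<-|[]].
    move=> t H; apply: H; by left.
Qed.
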